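(* Let $G=\mathrm{SL}_2(q)$ with $q$ a prime power. If $q$ is even, then every subgroup of $G$ is a perfect code of $G$. If $q$ is odd, then a subgroup $H$ of $G$ is a perfect code of $G$ if and only if either $|H|_2=1$ or $|H|_2=|G|_2$.
   Context: $|X|_2$ denotes the largest power of $2$ dividing $|X|$. For a group $G$ with identity $e$ and an inverse-closed subset $S\subseteq G\setminus\{e\}$, the Cayley graph $\mathrm{Cay}(G,S)$ has vertex set $G$ and edges $\{g,sg\}$ for $s\in S$, $g\in G$. A perfect code in a graph is an independent set $C$ of vertices such that every vertex outside $C$ is adjacent to exactly one vertex of $C$. A subgroup $H$ of $G$ is a perfect code of $G$ if some Cayley graph of $G$ admits $H$ as a perfect code. *)

(* Defs.v *)
From mathcomp Require Import all_boot all_order all_algebra all_fingroup.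
Set Implicit Arguments. Unset Strict Implicit. Unset Printing Implicit Defensive.
Local Open Scope group_scope.

(* Perfect codes in Cayley graphs.  Cay(G,S) has vertex set G and edges
   {g, s g} (s in S); so x and y are adjacent iff y * x^-1 \in S
   (symmetric as S is inverse-closed). *)
Definition cayley_adj (gT : finGroupType) (S : {set gT}) (x y : gT) : bool :=
  y * x^-1 \in S.

Definition is_perfect_code_cay (gT : finGroupType) (G S C : {set gT}) : Prop :=
  [/\ C \subset G,
      {in C &, forall x y, ~~ cayley_adj S x y} &
      {in G :\: C, forall x, #|[set c in C | cayley_adj S x c]| = 1%N}].

Definition connection_set (gT : finGroupType) (G S : {set gT}) : Prop :=
  S \subset G :\ 1 /\ {in S, forall s, s^-1 \in S}.

Definition perfect_code_of (gT : finGroupType) (G H : {set gT}) : Prop :=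
  exists S : {set gT}, connection_set G S /\ is_perfect_code_cay G S H.

Definition SL2 (F : finFieldType) : {set {'GL_2[F]}} :=
  [set g : {'GL_2[F]} | (\det (GLval g) == 1)%R].

(* Main.v *)
Require Import Defs.
From mathcomp Require Import all_boot all_order all_algebra all_fingroup.
From mathcomp Require Import all_solvable all_field.
From mathcomp Require Import zify ring.
Set Implicit Arguments. Unset Strict Implicit. Unset Printing Implicit Defensive.
Local Open Scope group_scope.

Section DC.
Variable gT : finGroupType.
Variable H : {group gT}.

Definition dc (x : gT) : {set gT} := (H :* x) * H.

Lemma dcP x y : reflect (exists a b, [/\ a \in H, b \in H & y = a * x * b]) (y \in dc x).
Proof.
apply: (iffP mulsgP) => [[u b /rcosetP[a Ha ->] Hb ->] | [a [b [Ha Hb ->]]]].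
  by exists a, b.
by exists (a * x) b => //; apply/rcosetP; exists a.
Qed.

Lemma dc_refl x : x \in dc x.
Proof. by apply/dcP; exists 1, 1; rewrite !group1 mulg1 mul1g. Qed.

Lemma dcE x y : y \in dc x -> dc y = dc x.
Proof.
case/dcP=> a [b [Ha Hb ->]]; apply/setP=> z; apply/dcP/dcP.
  case=> c [d [Hc Hd ->]]; exists (c * a), (b * d); split; rewrite ?groupM //.
  by rewrite !mulgA.
case=> c [d [Hc Hd ->]]; exists (c * a^-1), (b^-1 * d); split; rewrite ?groupM ?groupV //.
by rewrite !mulgA mulgKV mulgK.
Qed.

Lemma mem_dc x y : (y \in dc x) = (dc y == dc x).
Proof.
apply/idP/eqP; first exact: dcE.
by move=> <-; apply: dc_refl.
Qed.

Lemma dcV x y : (y \in dc x^-1) = (y^-1 \in dc x).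
Proof.
apply/dcP/dcP=> [[a [b [Ha Hb ->]]] | [a [b [Ha Hb E]]]].
  by exists b^-1, a^-1; rewrite !groupV !invMg invgK mulgA.
exists b^-1, a^-1; rewrite !groupV; split=> //.
by rewrite -[y]invgK E !invMg mulgA.
Qed.

Lemma dc_inv x y : dc x = dc y -> dc x^-1 = dc y^-1.
Proof.
move=> E; apply: dcE; rewrite dcV invgK -E; exact: dc_refl.
Qed.

Lemma dc_rcoset x c : (H :* c \subset dc x) = (c \in dc x).
Proof.
apply/subsetP/idP=> [-> // | cx z]; first exact: rcoset_refl.
case/rcosetP=> a Ha ->; move: cx => /dcP[u [v [Hu Hv ->]]].
by apply/dcP; exists (a * u), v; rewrite groupM // !mulgA.
Qed.

End DC.

Section Greedy.
Variable gT : finGroupType.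

Lemma triv_out (U : {set {set gT}}) A B x :
  trivIset U -> A \in U -> B \in U -> A != B -> x \in A -> (x \in B) = false.
Proof. by move/trivIsetP=> tU AU BU nAB; apply: disjointFr; apply: tU. Qed.

Lemma greedy (Q : {set {set gT}} -> Prop) :
  (forall U, Q U -> U != set0 -> exists C C2 g,
      [/\ C \in U, C2 \in U, g \in C, g^-1 \in C2 &
          (C = C2 -> g^-1 = g) /\ Q (U :\: [set C; C2])]) ->
  forall U, Q U -> trivIset U ->
  exists S : {set gT},
    [/\ {in S, forall s, exists2 B, B \in U & s \in B},
        {in S, forall s, s^-1 \in S} &
        {in U, forall C, #|S :&: C| = 1%N}].
Proof.
move=> step U; have [n] := ubnP #|U|; elim: n U => // n IH U ltU QU tU.
have [-> | nz] := eqVneq U set0.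
  by exists set0; split=> [s|s|C]; rewrite ?inE.
have [C [C2 [g [CU C2U gC giC2 [eqg QU']]]]] := step U QU nz.
set U' := U :\: [set C; C2].
have sU'U : U' \subset U by apply: subsetDl.
have ltU' : #|U'| < n.
  suff: #|U'| < #|U| by move=> h; apply: leq_trans h _; rewrite -ltnS.
  apply: leq_ltn_trans (proper_card (properD1 CU)).
  by apply: subset_leq_card; apply/subsetP=> B; rewrite !inE negb_or -andbA => /and3P[-> _ ->].
have tU' : trivIset U' := trivIsetS sU'U tU.
have [S' [S'cov S'inv S'one]] := IH U' ltU' QU' tU'.
have S'C : forall B s, B \in [set C; C2] -> s \in S' -> (s \in B) = false.
  move=> B s BCC /S'cov[B' B'U sB']; apply: (triv_out tU _ _ _ sB').
  - by move: B'U; rewrite inE => /andP[].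
  - by move: BCC; rewrite !inE => /orP[] /eqP->.
  by apply: contraTneq BCC => <-; move: B'U; rewrite inE => /andP[].
exists (S' :|: [set g; g^-1]); split.
- move=> s; rewrite !inE => /orP[/S'cov[B] | /orP[] /eqP->].
  + by rewrite inE => /andP[_ BU] sB; exists B.
  + by exists C.
  + by exists C2.
- move=> s; rewrite !inE => /orP[/S'inv-> // | /orP[] /eqP->].
    by rewrite eqxx !orbT.
  by rewrite invgK eqxx orbT.
move=> B BU; rewrite setIUl.
have [BC | nBC] := boolP (B \in [set C; C2]).
  have -> : S' :&: B = set0.
    by apply/setP=> s; rewrite !inE; case sS: (s \in S'); rewrite ?(S'C B s BC sS).
  rewrite set0U; apply/eqP/cards1P.
  move: BC; rewrite !inE => /orP[] /eqP->.
    exists g; apply/setP=> s; rewrite !inE; apply/idP/idP.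
      case/andP=> /orP[//|/eqP->] giC; case: (eqVneq C C2) => [E|nE].
        by rewrite eqg.
      by rewrite (triv_out tU C2U CU _ giC2) in giC; rewrite eq_sym.
    by move/eqP->; rewrite eqxx gC.
  exists g^-1; apply/setP=> s; rewrite !inE; apply/idP/idP.
    case/andP=> /orP[/eqP->|//] gC2; case: (eqVneq C C2) => [E|nE].
      by rewrite eqg.
    by rewrite (triv_out tU CU C2U nE gC) in gC2.
  by move/eqP->; rewrite eqxx giC2 orbT.
have BU' : B \in U' by rewrite inE nBC.
have -> : [set g; g^-1] :&: B = set0.
  move: nBC; rewrite !inE negb_or => /andP[nBC nBC2].
  apply/setP=> s; rewrite !inE.
  case: eqP => [->|_] /=; first by rewrite (triv_out tU CU BU) // eq_sym.
  case: eqP => [->|_] //=; by rewrite (triv_out tU C2U BU) // eq_sym.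
by rewrite setU0 S'one.
Qed.

End Greedy.

Section Crit.
Variable gT : finGroupType.
Variables G H : {group gT}.
Hypothesis sHG : H \subset G.

Let U0 : {set {set gT}} := rcosets H G :\ (H : {set gT}).
Let cnt (U : {set {set gT}}) z := #|[set C in U | C \subset dc H z]|.
Let inv_in z := [exists t in dc H z, t * t == 1].

Lemma dc_sub z : z \in G -> dc H z \subset G.
Proof.
move=> Gz; apply/subsetP=> x /dcP[a [b [Ha Hb ->]]].
by rewrite !groupM // (subsetP sHG).
Qed.

Lemma memU0 C : C \in U0 -> exists2 c, c \in G :\: H & C = H :* c.
Proof.
rewrite /U0 inE => /andP[nCH /rcosetsP[c Gc E]]; exists c; last by [].
rewrite inE Gc andbT; apply: contraNN nCH => Hc; by rewrite E (rcoset_id Hc) set11.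
Qed.

Lemma dc_H z : z \in H -> dc H z = H.
Proof.
move=> Hz; apply/setP=> x; apply/dcP/idP=> [[a [b [Ha Hb ->]]] | Hx].
  by rewrite !groupM.
by exists x, (z^-1); rewrite groupV; split=> //; rewrite mulgK.
Qed.

Lemma cntD1 (U : {set {set gT}}) (C : {set gT}) z : C \in U -> cnt U z = (C \subset dc H z) + cnt (U :\ C) z.
Proof.
move=> CU; rewrite /cnt (cardsD1 C); congr (_ + _).
  by rewrite inE CU.
by apply: eq_card => B; rewrite !inE andbA.
Qed.

Lemma setD2E (U : {set {set gT}}) C C2 : U :\: [set C; C2] = (U :\ C) :\ C2.
Proof. by apply/setP=> B; rewrite !inE; case: (B == C); case: (B == C2). Qed.

Lemma setD22E (U : {set {set gT}}) C : U :\: [set C; C] = U :\ C.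
Proof. by apply/setP=> B; rewrite !inE orbb. Qed.

Lemma cnt_rem1 (U : {set {set gT}}) c z : H :* c \in U ->
  cnt U z = (c \in dc H z) + cnt (U :\: [set H :* c; H :* c]) z.
Proof. by move=> CU; rewrite setD22E (cntD1 z CU) dc_rcoset. Qed.

Lemma cnt_rem2 (U : {set {set gT}}) c w z : H :* c \in U -> H :* w \in U -> H :* c != H :* w ->
  cnt U z = (c \in dc H z) + (w \in dc H z) + cnt (U :\: [set H :* c; H :* w]) z.
Proof.
move=> CU WU ne; rewrite setD2E (cntD1 z CU) (cntD1 z (C:=H :* w)) ?dc_rcoset ?addnA //.
by rewrite !inE WU eq_sym ne.
Qed.

Lemma dc_card u : #|dc H u| = (#|H| * #|H : H :&: H :^ u|)%N.
Proof.
have E : dc H u = u *: ((H :^ u) * H).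
  apply/setP=> x; rewrite mem_lcoset; apply/dcP/mulsgP.
    case=> a [b [Ha Hb ->]]; exists (a ^ u) b => //; first by rewrite memJ_conjg.
    by rewrite /conjg !mulgA.
  case=> y b; rewrite mem_conjg => Hy Hb E; exists (y ^ u^-1), b; split=> //.
  by rewrite /conjg invgK !mulgA mulgVK -mulgA -E mulKVg.
have h : (#|H| * #|H| = #|dc H u| * #|H :&: H :^ u|)%N.
  rewrite E card_lcoset setIC -{1}(cardJg H u); exact: (mul_cardG (H :^ u)%G H).
have h2 := Lagrange (subsetIl H (H :^ u)).
have pI := cardG_gt0 (H :&: H :^ u)%G; move: h h2 pI; rewrite /=. set D := #|dc H u|. set I := #|H :&: H :^ u|. set X := #|H : _|. move=> h h2 pI. rewrite -h2 in h *. nia.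
Qed.

Lemma dcV_set z : dc H z^-1 = (dc H z)^-1.
Proof. by apply/setP=> x; rewrite dcV inE. Qed.

Lemma cnt0 z : z \in G :\: H -> (cnt U0 z * #|H|)%N = #|dc H z|.
Proof.
case/setDP=> Gz nHz; apply/esym/card_uniform_partition.
  move=> C; rewrite inE => /andP[/memU0[c _ ->] _]; exact: card_rcoset.
apply/and3P; split.
- apply/eqP/setP=> x; apply/bigcupP/idP=> [[C] | xz].
    by rewrite inE => /andP[_ /subsetP h] /h.
  exists (H :* x); last exact: rcoset_refl.
  rewrite !inE dc_rcoset xz andbT; apply/andP; split.
    apply: contraNneq nHz => E; have : x \in H by rewrite -E rcoset_refl.
    move=> Hx; move: xz; rewrite mem_dc (dc_H Hx) => /eqP E2.
    by have := dc_refl H z; rewrite -E2.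
  by apply/rcosetsP; exists x => //; apply: (subsetP (dc_sub Gz)).
- have tR : trivIset (rcosets H G) by case/and3P: (rcosets_partition sHG).
  apply: trivIsetS tR; apply/subsetP=> C; rewrite /U0 !inE.
  by case/andP=> /andP[_ ->].
- rewrite /U0 !inE negb_and; apply/orP; left; rewrite negb_and; apply/orP; right.
  by apply/negP => /rcosetsP[x _ E]; have := rcoset_refl H x; rewrite -E inE.
Qed.


Definition Q (U : {set {set gT}}) := U \subset U0 /\
  (forall z, z \in G -> cnt U z = cnt U z^-1 /\
     (z^-1 \in dc H z -> ~~ inv_in z -> ~~ odd (cnt U z))).

Hypothesis hyp : forall u, u \in G -> u \notin H -> u * u \in H ->
  (exists2 h, h \in H & (h * u) * (h * u) = 1) \/ ~~ odd #|H : H :&: H :^ u|.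

Lemma Q0 : Q U0.
Proof.
split=> // z Gz.
have [Hz | nHz] := boolP (z \in H).
  have e : forall y, y \in H -> cnt U0 y = 0%N.
    move=> y Hy; apply/eqP; rewrite cards_eq0; apply/eqP/setP=> C; rewrite inE [in RHS]inE.
    apply/negbTE/negP => /andP[CU].
    have [c /setDP[_ nHc] EC] := memU0 CU.
    by rewrite EC dc_rcoset (dc_H Hy) => Hc; rewrite Hc in nHc.
  by rewrite !e ?groupV.
have GzH : z \in G :\: H by rewrite inE nHz Gz.
have GzH' : z^-1 \in G :\: H by rewrite inE !groupV nHz Gz.
split.
  apply/eqP; rewrite -(eqn_pmul2r (cardG_gt0 H)) (cnt0 GzH) (cnt0 GzH').
  by rewrite dcV_set card_invg.
move=> ziz ninv.
case/dcP: ziz => a [b [Ha Hb E]].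
set u := b * z.
have uz : u \in dc H z by apply/dcP; exists b, 1; rewrite mulg1 group1.
have Gu : u \in G by rewrite groupM // (subsetP sHG).
have nHu : u \notin H by rewrite groupMl.
have zb : z * b = a^-1 * z^-1 by rewrite E !mulgA mulVg mul1g.
have uu : u * u = b * a^-1.
  by rewrite /u -mulgA (mulgA z) zb -!mulgA mulVg mulg1.
have Huu : u * u \in H by rewrite uu groupM ?groupV.
have dcu : dc H u = dc H z := dcE uz.
case: (hyp Gu nHu Huu) => [[h Hh hh] | ev].
  case/negP: ninv; apply/existsP; exists (h * u); rewrite hh eqxx andbT.
  by rewrite -dcu; apply/dcP; exists h, 1; rewrite mulg1 group1.
have : (cnt U0 z * #|H| = #|H| * #|H : H :&: H :^ u|)%N by rewrite cnt0 // -dcu dc_card.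
move=> /eqP; rewrite mulnC eqn_pmul2l; last exact: cardG_gt0.
by move=> /eqP E2; rewrite E2.
Qed.


Lemma stepQ (U : {set {set gT}}) : Q U -> U != set0 -> exists C C2 g,
      [/\ C \in U, C2 \in U, g \in C, g^-1 \in C2 &
          (C = C2 -> g^-1 = g) /\ Q (U :\: [set C; C2])].
Proof.
case=> sU QU /set0Pn[C CU].
have [c /setDP[Gc nHc] EC] := memU0 (subsetP sU C CU).
subst C.
have sU' : forall C2, U :\: [set H :* c; C2] \subset U0.
  by move=> C2; apply: subset_trans sU; apply: subsetDl.
have [iv | niv] := boolP (inv_in c).
  case/existsP: iv => t /andP[tc /eqP tt].
  have dct : dc H t = dc H c := dcE tc.
  case/dcP: tc => a [b [Ha Hb Et]].
  set g := b * t * b^-1.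
  have gg : g * g = 1.
    by rewrite /g !mulgA mulgVK -(mulgA b t t) tt mulg1 mulgV.
  have gi : g^-1 = g by rewrite -[g^-1]mulg1 -gg mulKg.
  have Ec : c^-1 = b * t^-1 * a.
    by rewrite Et !invMg !mulgA mulgV mul1g mulgVK.
  have gC : g \in H :* c.
    by rewrite mem_rcoset Ec /g !mulgA mulgVK mulgK groupM.
  have ti : t^-1 = t by rewrite -[t^-1]mulg1 -tt mulKg.
  have dcci : dc H c^-1 = dc H c by rewrite -dct -(dc_inv dct) ti.
  exists (H :* c), (H :* c), g; split=> //; first by rewrite gi.
  split=> //; split; first exact: sU'.
  move=> z Gz.
  have e1 : (c \in dc H z^-1) = (c \in dc H z) by rewrite dcV !mem_dc dcci.
  have [ez ep] := QU z Gz.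
  rewrite (cnt_rem1 z CU) (cnt_rem1 z^-1 CU) e1 in ez.
  split; first exact: addnI ez.
  move=> zz nz; have := ep zz nz; rewrite (cnt_rem1 z CU).
  have -> : (c \in dc H z) = false.
    apply: negbTE; apply: contra nz => cz; apply/existsP; exists t.
    by rewrite tt eqxx andbT mem_dc dct -mem_dc.
  by rewrite add0n.
have [w [WU ne Gw wc]] : exists w, [/\ H :* w \in U, H :* c != H :* w, w \in G
                                      & w^-1 \in dc H c].
  have [cc | ncc] := boolP (c^-1 \in dc H c).
    have [_ ep] := QU c Gc; have := ep cc niv.
    rewrite (cntD1 c CU) dc_rcoset dc_refl add1n oddS negbK => on.
    have : (0 < cnt (U :\ H :* c) c)%N by move: on; case: (cnt _ _).
    rewrite card_gt0 => /set0Pn[C2]; rewrite !inE => /andP[/andP[neC2 C2U] C2sub].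
    have [w /setDP[Gw _] EC2] := memU0 (subsetP sU _ C2U).
    exists w; rewrite -EC2; split=> //; first by rewrite eq_sym.
    by rewrite EC2 dc_rcoset in C2sub; rewrite -(dcE cc) dcV invgK.
  have [ep _] := QU c Gc.
  have : (0 < cnt U c^-1)%N by rewrite -ep (cntD1 c CU) dc_rcoset dc_refl.
  rewrite card_gt0 => /set0Pn[C2]; rewrite !inE => /andP[C2U C2sub].
  have [w /setDP[Gw _] EC2] := memU0 (subsetP sU _ C2U).
  rewrite EC2 dc_rcoset in C2sub.
  exists w; split=> //; first by rewrite -EC2.
    apply: contraNneq ncc => E.
    have : H :* c \subset dc H c^-1 by rewrite E dc_rcoset.
    by rewrite dc_rcoset dcV.
  by rewrite -dcV.
have d1 : dc H w^-1 = dc H c := dcE wc.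
have d2 : dc H c^-1 = dc H w by rewrite -(dc_inv d1) invgK.
case/dcP: wc => a [b [Ha Hb Ew]].
set g := a * c.
have gC : g \in H :* c by apply/rcosetP; exists a.
have giW : g^-1 \in H :* w.
  by rewrite mem_rcoset Ew /g invMg !mulgA mulgVK mulVg mul1g.
exists (H :* c), (H :* w), g; split=> //.
split; first by move=> E; rewrite E eqxx in ne.
split; first exact: sU'.
move=> z Gz.
have e1 : (c \in dc H z^-1) = (w \in dc H z) by rewrite dcV !mem_dc d2.
have e2 : (w \in dc H z^-1) = (c \in dc H z) by rewrite dcV !mem_dc d1.
have [ez ep] := QU z Gz.
rewrite (cnt_rem2 z CU WU ne) (cnt_rem2 z^-1 CU WU ne) e1 e2 [(w \in _) + _]addnC in ez.
split; first exact: addnI ez.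
move=> zz nz; have := ep zz nz; rewrite (cnt_rem2 z CU WU ne).
have -> : (w \in dc H z) = (c \in dc H z) by rewrite -e2 (dcE zz).
by rewrite addnn oddD odd_double.
Qed.

Theorem crit : perfect_code_of G H.
Proof.
have tR : trivIset (rcosets H G) by case/and3P: (rcosets_partition sHG).
have tU0 : trivIset U0 by apply: trivIsetS tR; apply: subsetDl.
have [S [Scov Sinv Sone]] := greedy stepQ Q0 tU0.
have SnH : forall s, s \in S -> s \notin H /\ s \in G.
  move=> s Ss; have [B BU sB] := Scov s Ss.
  have [c /setDP[Gc nHc] EB] := memU0 BU.
  rewrite EB mem_rcoset in sB; split.
    apply: contra nHc => Hs.
    have : (s * c^-1)^-1 * s \in H by rewrite groupM ?groupV.
    by rewrite invMg invgK -mulgA mulVg mulg1.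
  by rewrite -(mulgVK c s) groupM // (subsetP sHG).
exists S; split.
  split; last exact: Sinv.
  apply/subsetP=> s Ss; have [nHs Gs] := SnH s Ss.
  rewrite !inE Gs andbT; apply: contraNneq nHs => ->; exact: group1.
split.
- exact: sHG.
- move=> x y Hx Hy; rewrite /cayley_adj; apply/negP => yS.
  by have [] := SnH _ yS; rewrite groupM ?groupV.
move=> x /setDP[Gx nHx]; rewrite /cayley_adj.
have CU : H :* x^-1 \in U0.
  rewrite /U0 !inE; apply/andP; split.
    apply: contraNneq nHx => E; have := rcoset_refl H x^-1; rewrite E groupV //.
  by apply/rcosetsP; exists x^-1; rewrite ?groupV.
rewrite -(Sone _ CU) -(card_rcoset _ x^-1); apply: eq_card => y.
by rewrite mem_rcoset !inE mem_rcoset invgK mulgK andbC.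
Qed.

End Crit.

Section Cor.
Variable gT : finGroupType.
Variables G H : {group gT}.
Hypothesis sHG : H \subset G.

Lemma T_inv :
  (forall u, u \in G -> u \notin H -> u * u \in H -> u.`_2 * u.`_2 = 1) ->
  perfect_code_of G H.
Proof.
move=> h2; apply: crit => // u Gu nHu uu; left.
set v := u.`_2^'; set y := u.`_2.
have cuH : <[u * u]> \subset H by rewrite cycle_subG.
have vv : v * v \in H.
  have e : (u * u).`_2^' = v * v := consttX _ u 2.
  by rewrite -e (subsetP cuH) // cycle_constt.
have ov : odd #[v] by rewrite odd_2'nat; exact: p_elt_constt.
have Hv : v \in H.
  have : (v * v) ^+ (#[v].+1)./2 \in H by rewrite groupX.
  have e : (2 * (#[v].+1)./2 = #[v].+1)%N.
    by rewrite mul2n -{2}(odd_double_half #[v].+1) oddS ov.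
  by rewrite -[v * v]/(v ^+ 2) -expgM e expgSr expg_order mul1g.
exists v^-1; first by rewrite groupV.
have cyv : commute y v.
  exact: (centsP (cycle_abelian u)) y (cycle_constt _ _) v (cycle_constt _ _).
have -> : v^-1 * u = y by rewrite -{1}(consttC 2 u) -/y -/v cyv mulKg.
exact: h2.
Qed.

Lemma T_odd : odd #|H| -> perfect_code_of G H.
Proof.
move=> oH; apply: T_inv => u Gu nHu uu.
have e : (u * u).`_2 = u.`_2 * u.`_2 := consttX _ u 2.
set w := (u * u).`_2 in e.
have Hw : w \in H.
  have cuH : <[u * u]> \subset H by rewrite cycle_subG.
  by rewrite (subsetP cuH) // cycle_constt.
have o1 : #[w] = 1%N.
  apply: (@pnat_1 2); first exact: p_elt_constt.
  apply: pnat_dvd (order_dvdG Hw) _; by rewrite -odd_2'nat.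
by rewrite -e; apply/eqP; rewrite -order_eq1 o1.
Qed.

Lemma T_2elt : (forall y, y \in G -> 2.-elt y -> y * y = 1) -> perfect_code_of G H.
Proof.
move=> h; apply: T_inv => u Gu nHu uu; apply: h; last exact: p_elt_constt.
have cuG : <[u]> \subset G by rewrite cycle_subG.
by rewrite (subsetP cuG) // cycle_constt.
Qed.


Lemma T_syl : logn 2 #|H| = logn 2 #|G| -> perfect_code_of G H.
Proof.
move=> lHG; apply: crit => // u Gu nHu uu; right.
pose K : {group gT} := (H :&: H :^ u)%G.
apply/negP => oi.
have sKH : K \subset H by apply: subsetIl.
have nKu : u \in 'N(K).
  by apply/normP; rewrite /K conjIg -conjsgM (conjGid uu) setIC.
have Huu : u * u \in K.
  by rewrite inE uu mem_conjg conjgE invgK mulgK.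
have sMN : <[u]> \subset 'N(K) by rewrite cycle_subG.
have EL : K * <[u]> = K :|: K :* u.
  apply/setP=> x; rewrite inE; apply/mulsgP/orP.
    case=> k m Kk /cycleP[i ->] ->.
    rewrite -(odd_double_half i) addnC expgD -mul2n expgM.
    have Kj : (u ^+ 2) ^+ i./2 \in K by rewrite groupX.
    case: (odd i) => /=.
      right; apply/rcosetP; exists (k * (u ^+ 2) ^+ i./2); first by rewrite groupM.
      by rewrite expg1 mulgA.
    by left; rewrite expg0 mulg1 groupM.
  case=> [Kx | /rcosetP[k Kk ->]].
    by exists x 1; rewrite ?group1 ?mulg1.
  by exists k u; rewrite ?cycle_id.
have dis : K :&: K :* u = set0.
  apply/setP=> x; rewrite in_set0; apply/negbTE/negP; rewrite in_setI mem_rcoset => /andP[Kx Kxu].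
  have : (x * u^-1)^-1 * x \in K by rewrite groupM ?groupV.
  rewrite invMg invgK -mulgA mulVg mulg1 => Ku.
  by case/negP: nHu; apply: (subsetP sKH).
have cL : #|K * <[u]>| = (2 * #|K|)%N.
  by rewrite EL cardsU dis cards0 subn0 card_rcoset addnn -mul2n.
have dvd : (2 * #|K| %| #|G|)%N.
  rewrite -cL -(norm_joinEr sMN); apply: cardSg.
  by rewrite join_subG cycle_subG Gu andbT (subset_trans sKH sHG).
have hL := Lagrange (subsetIl H (H :^ u)).
have lK : logn 2 #|H| = logn 2 #|K|.
  rewrite -hL lognM ?cardG_gt0 ?indexg_gt0 //.
  by rewrite (@logn_coprime 2 #|H : _|) ?addn0 // coprime2n.
have := dvdn_leq_log 2 (cardG_gt0 G) dvd.
rewrite lognM ?cardG_gt0 // logn_prime // -lK lHG /=.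
lia.
Qed.

End Cor.

Section M2.
Import GRing.Theory.
Local Open Scope ring_scope.
Variable F : fieldType.

Lemma det2 (A : 'M[F]_2) : \det A = A 0 0 * A 1 1 - A 0 1 * A 1 0.
Proof.
rewrite (expand_det_row _ 0) !big_ord_recl big_ord0 /cofactor !det_mx11 !mxE /=.
have l1 : lift (0 : 'I_2) (0 : 'I_1) = 1 by apply/val_inj.
have l2 : lift (ord0 : 'I_2) (ord0 : 'I_1) = 1 by apply/val_inj.
have l3 : lift (lift (ord0 : 'I_2) (ord0 : 'I_1)) (0 : 'I_1) = 0 by apply/val_inj.
have l4 : lift (1 : 'I_2) (0 : 'I_1) = 0 by apply/val_inj.
rewrite ?l1 ?l2 ?l3 l4 /= expr0 mul1r expr1 mulN1r addr0 mulrN.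
by [].
Qed.

Lemma ch2 (A : 'M[F]_2) : A *m A = \tr A *: A - (\det A)%:M.
Proof.
have l1 : lift (0 : 'I_2) (0 : 'I_1) = 1 by apply/val_inj.
apply/matrixP => i j; rewrite det2 /mxtrace !mxE !big_ord_recl !big_ord0 /= ?l1 ?mxE.
have o2 : forall k : 'I_2, k = 0 \/ k = 1.
  by case=> [[|[|//]] H]; [left|right]; apply/val_inj.
by case: (o2 i) => ->; case: (o2 j) => ->; rewrite /= ?mulr1n ?mulr0n; ring.
Qed.

Lemma ch2r (A : 'M[F]_2) : A * A = \tr A *: A - (\det A)%:M.
Proof. by rewrite -mulmxE ch2. Qed.

Lemma inv2 (A : 'M[F]_2) : (2%:R : F) != 0 -> A * A = 1 -> \det A = 1 ->
  A = 1 \/ A = -1.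
Proof.
move=> n2 AA dA.
have e : \tr A *: A = 2%:R%:M.
  have := ch2r A; rewrite AA dA => /eqP; rewrite eq_sym subr_eq => /eqP ->.
  by rewrite -[2%:R]/(1 + 1) raddfD.
have [t0 | tn0] := eqVneq (\tr A) 0.
  move: e; rewrite t0 scale0r => /matrixP /(_ 0 0); rewrite !mxE /= => /esym /eqP.
  by rewrite mulr1n (negbTE n2).
have eA : A = ((\tr A)^-1 * 2%:R)%:M.
  by rewrite -scale_scalar_mx -e scalerA mulVf // scale1r.
move: AA; rewrite eA -mulmxE -scalar_mxM => /matrixP /(_ 0 0); rewrite !mxE /= !mulr1n.
move=> /eqP; rewrite -expr2 sqrf_eq1 => /orP[] /eqP ->.
  by left.
by right; rewrite raddfN.
Qed.

Lemma sq_char2 (x : 'M[F]_2) : (2%:R : F) = 0 -> (x - 1) ^+ 2 = x ^+ 2 - 1.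
Proof.
move=> c2.
have two : (1 + 1 : 'M[F]_2) = 0.
  by rewrite -raddfD -[(1 + 1)]/(2%:R : F) c2 raddf0.
have xx : x + x = 0 by rewrite -[x + x]mulr2n -mulr_natl -[2%:R]/(1 + 1 : 'M[F]_2) two mul0r.
have m1 : - (1 : 'M[F]_2) = 1 by apply/eqP; rewrite eq_sym -subr_eq0 opprK two.
by rewrite sqrrB1 mulr2n xx subr0 m1.
Qed.

Lemma nil2 (N : 'M[F]_2) m : N ^+ m.+1 = 0 -> N * N = 0.
Proof.
move=> Nm.
have dN : \det N = 0.
  have e : forall k, \det (N ^+ k) = \det N ^+ k.
    elim=> [|k IH]; first by rewrite !expr0 det1.
    by rewrite !exprS -mulmxE det_mulmx IH.
  by have := expf_eq0 (\det N) m.+1; rewrite -e Nm det0 eqxx /= => /esym /eqP.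
have NN : N * N = \tr N *: N by rewrite ch2r dN raddf0 subr0.
have e : forall k, N ^+ k.+1 = \tr N ^+ k *: N.
  elim=> [|k IH]; first by rewrite expr1 expr0 scale1r.
  by rewrite exprS IH -scalerAr NN scalerA -exprSr.
move: Nm; rewrite e => /eqP; rewrite scaler_eq0 => /orP[tm | /eqP ->]; last by rewrite mul0r.
have t0 : \tr N = 0 by apply/eqP; move: tm; rewrite expf_eq0 => /andP[].
by rewrite NN t0 scale0r.
Qed.

Lemma char2_sq (A : 'M[F]_2) k : (2%:R : F) = 0 -> A ^+ (2 ^ k) = 1 -> A * A = 1.
Proof.
move=> c2 Ak.
have e : forall j, (A - 1) ^+ (2 ^ j) = A ^+ (2 ^ j) - 1.
  elim=> [|j IH]; first by rewrite !expr1.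
  by rewrite expnSr !exprM IH sq_char2.
case: k Ak => [|k] Ak.
  by move: Ak; rewrite expn0 expr1 => ->; rewrite mulr1.
have : (A - 1) ^+ (2 ^ k.+1) = 0 by rewrite e Ak subrr.
rewrite -(prednK (expn_gt0 2 k.+1)) => /nil2.
rewrite -expr2 sq_char2 // => /eqP; rewrite subr_eq0 expr2 => /eqP //.
Qed.
End M2.

Import GRing.Theory.

Lemma even_inv (gT : finGroupType) (S : {set gT}) :
  {in S, forall s, s^-1 \in S} -> {in S, forall s, s^-1 != s} -> ~~ odd #|S|.
Proof.
have [n] := ubnP #|S|; elim: n S => // n IH S ltS Sinv Sfix.
have [-> | /set0Pn[s Ss]] := eqVneq S set0; first by rewrite cards0.
set S' := S :\: [set s; s^-1].
have e : #|S| = (2 + #|S'|)%N.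
  rewrite -(cardsID [set s; s^-1] S); congr (_ + _).
  have -> : S :&: [set s; s^-1] = [set s; s^-1].
    by apply/setIidPr/subsetP=> x; rewrite !inE => /orP[]/eqP->; rewrite ?Sinv.
  by rewrite cards2 eq_sym Sfix.
have S'inv : {in S', forall x, x^-1 \in S'}.
  move=> x; rewrite !inE negb_or => /andP[/andP[nxs nxsi] Sx].
  rewrite Sinv // andbT negb_or; apply/andP; split.
    by apply: contra nxsi => /eqP <-; rewrite invgK.
  by apply: contra nxs => /eqP/invg_inj->.
have S'fix : {in S', forall x, x^-1 != x}.
  by move=> x; rewrite inE => /andP[_ /Sfix].
rewrite e /= oddD /= !negbK; apply: IH => //.
by move: ltS; rewrite e; lia.
Qed.

Lemma conv (gT : finGroupType) (G H : {group gT}) : H \subset G ->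
  (forall g, g \in G -> g * g = 1 -> g \in H) -> perfect_code_of G H -> odd #|G : H|.
Proof.
move=> sHG allinv [S [[sS Sinv] [_ indep one]]].
have SH : forall s, s \in S -> s \notin H.
  move=> s Ss; apply/negP=> Hs; have := indep 1 s (group1 H) Hs.
  by rewrite /cayley_adj invg1 mulg1 Ss.
have SG : forall s, s \in S -> s \in G.
  by move=> s /(subsetP sS); rewrite !inE => /andP[].
have Sfix : {in S, forall s, s^-1 != s}.
  move=> s Ss; apply/negP=> /eqP e; case/negP: (SH s Ss); apply: allinv (SG s Ss) _.
  by rewrite -{2}e mulgV.
have ev := even_inv Sinv Sfix.
have one' : forall y, y \in G :\: H -> #|S :&: H :* y| = 1%N.
  move=> y; rewrite inE => /andP[nHy Gy].
  have := one y^-1; rewrite inE groupV nHy groupV Gy => /(_ isT) <-.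
  rewrite -(card_rcoset [set c in H | cayley_adj S y^-1 c] y); apply: eq_card => z.
  by rewrite /cayley_adj !inE !mem_rcoset !inE invgK mulgVK andbC.
set U0 := rcosets H G :\ (H : {set gT}).
have eU : [set H :* s | s in S] = U0.
  apply/setP=> C; apply/imsetP/idP.
    case=> s Ss ->; rewrite !inE; apply/andP; split.
      apply/negP=> /eqP E; case/negP: (SH s Ss); by rewrite -E rcoset_refl.
    by apply/rcosetsP; exists s => //; apply: SG.
  rewrite !inE => /andP[nCH /rcosetsP[c Gc EC]].
  have nHc : c \notin H by apply: contraNN nCH => Hc; rewrite EC rcoset_id.
  have : #|S :&: H :* c| = 1%N by apply: one'; rewrite inE nHc Gc.
  move=> /eqP/cards1P[s Es]; have : s \in S :&: H :* c by rewrite Es set11.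
  rewrite inE => /andP[Ss sc]; exists s => //; rewrite EC; exact/esym/rcoset_eqP.
have cS : #|S| = #|U0|.
  rewrite -eU card_in_imset // => s1 s2 S1 S2 E.
  have s1G : s1 \in G :\: H by rewrite inE SH // SG.
  have /eqP/cards1P[x Ex] := one' s1 s1G.
  have m1 : s1 \in S :&: H :* s1 by rewrite inE S1 rcoset_refl.
  have m2 : s2 \in S :&: H :* s1 by rewrite inE S2 E rcoset_refl.
  by move: m1 m2; rewrite Ex !inE => /eqP-> /eqP->.
have cU : #|rcosets H G| = #|U0|.+1.
  have HR : (H : {set gT}) \in rcosets H G.
    by apply/rcosetsP; exists 1; rewrite ?group1 ?rcoset1.
  by rewrite (cardsD1 (H : {set gT})) HR add1n.
rewrite /indexg cU -cS /=; exact: ev.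
Qed.

Import GRing.Theory.

Section SL.
Variable F : finFieldType.

Lemma SL2_group_set : group_set (SL2 F).
Proof.
apply/group_setP; split; first by rewrite inE GL_1E det1.
move=> x y; rewrite !inE GL_ME -mulmxE det_mulmx => /eqP-> /eqP->.
by rewrite mulr1.
Qed.

Definition SL2G : {group {'GL_2[F]}} := Group SL2_group_set.

Lemma GL_X (y : {'GL_2[F]}) n : GLval (y ^+ n) = ((GLval y) ^+ n)%R.
Proof.
elim: n => [|n IH]; first by rewrite expg0 expr0.
by rewrite expgS GL_ME IH exprS.
Qed.

Lemma pnatF : exists2 p, (p \in [pchar F])%R & p.-nat #|F|.
Proof.
have [p pr pc] := finPcharP F; exists p => //.
by have := abelem_pgroup (fin_ring_pchar_abelem pc); rewrite /pgroup cardsT.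
Qed.

Lemma char_even : ~~ odd #|F| -> (2%:R : F)%R = 0%R.
Proof.
move=> ev; have [p pc pn] := pnatF.
have : p.-nat 2 by apply: pnat_dvd pn; rewrite dvdn2.
rewrite pnatE // => /eqnP e2.
by move: (pcharf0 pc); rewrite -e2.
Qed.

Lemma char_odd : odd #|F| -> (2%:R : F)%R != 0%R.
Proof.
move=> od; apply/negP => /eqP c2.
have pc2 : (2 \in [pchar F])%R by rewrite inE /= c2 eqxx.
have pn : 2.-nat #|F|.
  by have := abelem_pgroup (fin_ring_pchar_abelem pc2); rewrite /pgroup cardsT.
have := pnat_1 pn; rewrite -odd_2'nat => /(_ od) e.
by have := card_finNzRing_gt1 F; rewrite e.
Qed.

Lemma two_elt_sq : (2%:R : F)%R = 0%R -> forall y : {'GL_2[F]}, 2.-elt y -> y * y = 1.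
Proof.
move=> c2 y /p_natP[k ok]; apply: val_inj.
change (GLval (y * y) = GLval 1); rewrite GL_ME GL_1E; apply: (@char2_sq _ _ k c2).
by rewrite -GL_X -ok expg_order.
Qed.

Lemma inv_unique : (2%:R : F)%R != 0%R -> forall g : {'GL_2[F]},
  g \in SL2 F -> g * g = 1 -> g != 1 -> GLval g = (-1)%R.
Proof.
move=> n2 g; rewrite inE => /eqP dg gg ng.
have AA : (GLval g * GLval g = 1)%R by rewrite -GL_ME gg.
case: (inv2 n2 AA dg) => // e1.
by case/eqP: ng; apply: val_inj; change (GLval g = GLval 1); rewrite e1.
Qed.

End SL.

Theorem lemma4p6 (F : finFieldType) :
  (~~ odd #|F| ->
     forall H : {group {'GL_2[F]}}, H \subset SL2 F -> perfect_code_of (SL2 F) H)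
  /\
  (odd #|F| ->
     forall H : {group {'GL_2[F]}}, H \subset SL2 F ->
       perfect_code_of (SL2 F) H <->
       (partn #|H| 2 = 1%N \/ partn #|H| 2 = partn #|SL2 F| 2)).
Proof.
split.
  move=> ev H sH; apply: (T_2elt (G := SL2G F) sH) => y _.
  exact: (two_elt_sq (char_even ev) (y := y)).
move=> od H sH; split.
  move=> pc; have [oH | eH] := boolP (odd #|H|).
    by left; rewrite p_part logn_coprime // coprime2n.
  right.
  have [x Hx ox] : {x | x \in H & #[x] = 2%N} by apply: Cauchy; rewrite ?dvdn2.
  have xx : x * x = 1 by have := expg_order x; rewrite ox.
  have nx1 : x != 1 by rewrite -order_eq1 ox.
  have n2 := char_odd od.
  have xG : x \in SL2 F by apply: (subsetP sH).
  have allinv : forall g, g \in SL2G F -> g * g = 1 -> g \in H.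
    move=> g Gg gg; have [-> | ng] := eqVneq g 1; first exact: group1.
    suff -> : g = x by [].
    by apply: val_inj; change (GLval g = GLval x); rewrite !inv_unique.
  have oi := @conv _ (SL2G F) H sH allinv pc.
  have hL := Lagrange (G := SL2G F) sH.
  rewrite !p_part; congr (2 ^ _)%N.
  rewrite -[#|SL2 F|]/(#|SL2G F|) -hL lognM ?cardG_gt0 ?indexg_gt0 //.
  by rewrite (@logn_coprime 2 #|_ : _|) ?addn0 // coprime2n.
case=> [e1 | e2].
  have l0 : logn 2 #|H| = 0%N.
    by move: e1; rewrite p_part; case: (logn 2 #|H|) => // k; rewrite expnS; lia.
  have : ~~ (0 < logn 2 #|H|)%N by rewrite l0.
  rewrite logn_gt0 mem_primes cardG_gt0 /= dvdn2 negbK => oH.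
  exact: (T_odd (G := SL2G F) sH oH).
rewrite !p_part in e2.
exact: (T_syl (G := SL2G F) sH (expnI (isT : 1 < 2)%N e2)).
Qed.
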